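(* Let $(m,n)$ be coprime positive integers, $\gamma\in D_{m,n}$, and let $\gamma^*\in D_{m+n,n}$ be obtained by inserting one horizontal unit step immediately after each vertical step of $\gamma$. Then \[ h(\gamma)=h(\gamma^* )-\sum_{p\in V(\gamma^* )}k(p). \]
   Context: For coprime positive $(m,n)$, an $(m,n)$-Dyck path is a lattice path from $(0,0)$ to $(m,n)$ of $m$ horizontal unit steps $(1,0)$ and $n$ vertical unit steps $(0,1)$ lying weakly above the diagonal $y=(n/m)x$; $D_{m,n}$ is the set of them. For a path in $D_{m,n}$ (resp. $D_{m+n,n}$), a parallel line is a line parallel to its diagonal $y=(n/m)x$ (resp. $y=(n/(m+n))x$), and $l(p)$ is the parallel line through $p$. $O(\gamma)$ is the set of pairs $(r_h,r_v)$ with $r_h$ a horizontal step and $r_v$ a vertical step of $\gamma$, $r_v$ appearing after $r_h$; $H(\gamma)$ is the set of pairs in $O(\gamma)$ for which some parallel line intersects both steps; $h(\gamma)=|H(\gamma)|$. An outer vertex is a lattice point of the path immediately after a vertical step and immediately before a horizontal step; for an outer vertex $p$, $k(p)$ is the number of horizontal steps of the path intersecting $l(p)$, not counting the two steps meeting at $p$. $p_0$ is the outer vertex farthest from the diagonal and $V(\cdot)$ is the set of outer vertices other than $p_0$. *)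

(* Defs.v *)
From mathcomp Require Import all_boot all_order all_algebra.
Set Implicit Arguments. Unset Strict Implicit. Unset Printing Implicit Defensive.
Import GRing.Theory Num.Theory.

(* A lattice path is a sequence of steps: [true] = vertical unit step (0,1),
   [false] = horizontal unit step (1,0).  Step number i (0-based) starts at the
   lattice point reached after the first i steps. *)

Definition px (g : seq bool) (i : nat) : nat := count negb (take i g).
Definition py (g : seq bool) (i : nat) : nat := count id (take i g).

(* For the diagonal y = (n/m) x, the parallel line through (x,y) is the level
   set of  L(x,y) = m*y - n*x.  [lev m n g i] is the level of the point
   reached after i steps. *)
Definition lev (m n : nat) (g : seq bool) (i : nat) : int :=
  ((m * py g i)%:Z - (n * px g i)%:Z)%R.

Definition is_dyck (m n : nat) (g : seq bool) : bool :=
  [&& count id g == n, count negb g == m &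
      all (fun i => n * px g i <= m * py g i) (iota 0 (size g).+1)].

(* (i,j) in H(g): step i horizontal, step j vertical, j after i, and some
   parallel line meets both steps.  The horizontal step i covers the levels
   [lev i - n, lev i], the vertical step j covers [lev j, lev j + m]. *)
Definition in_H (m n : nat) (g : seq bool) (i j : nat) : bool :=
  [&& i < j, j < size g, ~~ nth true g i, nth false g j,
      (lev m n g i - n%:Z <= lev m n g j + m%:Z)%R &
      (lev m n g j <= lev m n g i)%R].

Definition hstat (m n : nat) (g : seq bool) : nat :=
  #|[set p : 'I_(size g) * 'I_(size g) | in_H m n g p.1 p.2]|.

Definition star (g : seq bool) : seq bool :=
  flatten [seq (if b then [:: true; false] else [:: false]) | b <- g].

Definition outer (g : seq bool) (i : nat) : bool :=
  [&& 0 < i, i < size g, nth false g i.-1 & ~~ nth true g i].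

(* k(p) for p the point after i steps: number of horizontal steps of g meeting
   the parallel line l(p), excluding the two steps (i-1 and i) meeting at p. *)
Definition kval (m n : nat) (g : seq bool) (i : nat) : nat :=
  #|[set j : 'I_(size g) | [&& ~~ nth true g j, (j : nat) != i, (j : nat) != i.-1,
       (lev m n g j - n%:Z <= lev m n g i)%R & (lev m n g i <= lev m n g j)%R]]|.

(* V(g): outer vertices other than the outer vertex p0 farthest from the
   diagonal (distance to the diagonal is proportional to the level). *)
Definition Vset (m n : nat) (g : seq bool) : {set 'I_(size g).+1} :=
  [set i : 'I_(size g).+1 | outer g i &&
     [exists i' : 'I_(size g).+1, outer g i' && (lev m n g i < lev m n g i')%R]].

(* Main.v *)
Require Import Defs.
From mathcomp Require Import all_boot all_order all_algebra zify ring.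
Import GRing.Theory Num.Theory.
Set Implicit Arguments. Unset Strict Implicit. Unset Printing Implicit Defensive.
Local Open Scope ring_scope.

Definition stepv (a b : nat) (x : bool) : int := if x then a%:Z else - b%:Z.

Lemma lev0 a b g : lev a b g 0 = 0.
Proof. by rewrite /lev /px /py take0 /= !muln0. Qed.

Lemma levS a b g t : (t < size g)%N ->
  lev a b g t.+1 = lev a b g t + stepv a b (nth false g t).
Proof.
move=> ht; rewrite /lev /px /py (take_nth false ht) -!cats1 !count_cat /=.
case: (nth false g t) => /=; rewrite /stepv !mulnDr !muln0 !muln1 !addn0; lia.
Qed.

Lemma lev_cons a b x g t : lev a b (x :: g) t.+1 = stepv a b x + lev a b g t.
Proof.
rewrite /lev /px /py /= /stepv; case: x => /=; rewrite !mulnDr !muln0 !muln1; lia.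
Qed.

Definition shift (d : int) (x : bool * int) : bool * int := (x.1, x.2 + d).

Definition sl (a b : nat) (g : seq bool) : seq (bool * int) :=
  [seq (nth false g t, lev a b g t) | t <- iota 0 (size g)].

Lemma size_sl a b g : size (sl a b g) = size g.
Proof. by rewrite size_map size_iota. Qed.

Lemma nth_sl a b g t : (t < size g)%N ->
  nth (false, 0) (sl a b g) t = (nth false g t, lev a b g t).
Proof. by move=> ht; rewrite (nth_map 0%N) ?size_iota // nth_iota. Qed.

Lemma sl_cons a b x g :
  sl a b (x :: g) = (x, 0) :: map (shift (stepv a b x)) (sl a b g).
Proof.
rewrite /sl /= lev0 -[1%N]addn0 iotaDl -!map_comp; congr (_ :: _).
apply: eq_map => t /=; by rewrite /shift /= lev_cons addrC.
Qed.

Definition stf (M : int) (x : bool * int) : seq (bool * int) :=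
  if x.1 then [:: (true, x.2); (false, x.2 + M)] else [:: x].

Lemma stf_shift M d x : stf M (shift d x) = map (shift d) (stf M x).
Proof. case: x => b L; case: b; rewrite /stf /shift /= //; congr (_ :: _ :: _); congr (_, _); ring. Qed.

Lemma sl_star m n g :
  sl (m + n) n (star g) = flatten (map (stf (m + n)%:Z) (sl m n g)).
Proof.
elim: g => [|x g IH] //.
have E : forall d s, flatten (map (stf (m + n)%:Z) (map (shift d) s)) =
   map (shift d) (flatten (map (stf (m + n)%:Z) s)).
  move=> d s; rewrite map_flatten -!map_comp; congr flatten; apply: eq_map => y.
  by rewrite /= stf_shift.
case: x.
- have -> : star (true :: g) = true :: false :: star g by [].
  rewrite [sl (m + n) n _]sl_cons [sl (m + n) n _]sl_cons IH [sl m n (true :: g)]sl_cons /= E -map_comp.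
  rewrite {1 2}/stf /= /shift /=.
  congr (_ :: _ :: _); apply: eq_map => y /=; congr (_, _); rewrite PoszD; ring.
- have -> : star (false :: g) = false :: star g by [].
  by rewrite !sl_cons IH /= E.
Qed.

Fixpoint pc (F : bool * int -> bool * int -> int) (s : seq (bool * int)) : int :=
  if s is x :: s' then \sum_(y <- s') F x y + pc F s' else 0.

Lemma pc_cat F s1 s2 : pc F (s1 ++ s2) =
  pc F s1 + \sum_(x <- s1) \sum_(y <- s2) F x y + pc F s2.
Proof.
elim: s1 => [|x s1 IH] /=; first by rewrite big_nil !add0r.
rewrite IH big_cat big_cons /=; ring.
Qed.

Lemma pc_flatten F (f : bool * int -> seq (bool * int)) s :
  pc F (flatten (map f s)) = \sum_(x <- s) pc F (f x) +
     pc (fun x y => \sum_(u <- f x) \sum_(v <- f y) F u v) s.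
Proof.
elim: s => [|x s IH] /=; first by rewrite big_nil add0r.
rewrite pc_cat IH big_cons.
have -> : \sum_(u <- f x) \sum_(v <- flatten [seq f i | i <- s]) F u v =
          \sum_(y <- s) \sum_(u <- f x) \sum_(v <- f y) F u v.
  rewrite exchange_big big_flatten /= big_map; apply: eq_bigr => y _.
  by rewrite exchange_big.
ring.
Qed.

Lemma pc_sub F G s : pc (fun x y => F x y - G x y) s = pc F s - pc G s.
Proof. elim: s => [|x s IH] /=; first by rewrite subr0. rewrite IH sumrB; ring. Qed.

Lemma pc_add F G s : pc (fun x y => F x y + G x y) s = pc F s + pc G s.
Proof. elim: s => [|x s IH] /=; first by rewrite addr0. rewrite IH big_split /=; ring. Qed.

Lemma allpairs_pc F s : \sum_(x <- s) \sum_(y <- s) F x y =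
  pc F s + pc (fun x y => F y x) s + \sum_(x <- s) F x x.
Proof.
elim: s => [|x s IH] /=; first by rewrite !big_nil !add0r.
rewrite big_cons big_cons /=.
have E : \sum_(j <- s) \sum_(y <- x :: s) F j y =
   \sum_(j <- s) F j x + \sum_(j <- s) \sum_(y <- s) F j y.
  by rewrite -big_split; apply: eq_bigr => j _; rewrite big_cons.
rewrite E IH big_cons; ring.
Qed.

Lemma pc_idx F s x0 : pc F s =
  \sum_(0 <= i < size s) \sum_(i.+1 <= j < size s) F (nth x0 s i) (nth x0 s j).
Proof.
elim: s => [|x s IH] /=; first by rewrite big_geq.
rewrite big_nat_recl //= IH; congr (_ + _).
  by rewrite big_add1 /= (big_nth x0) /=.
by apply: eq_bigr => i _; rewrite big_add1.
Qed.

Lemma count_split (p : pred bool) (g : seq bool) i j : (i <= j)%N ->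
  count p (take j g) = (count p (take i g) + count p (take (j - i) (drop i g)))%N.
Proof. by move=> hij; rewrite -{1}(subnKC hij) takeD count_cat. Qed.

Lemma cnt_sum (s : seq bool) : (count negb s + count id s)%N = size s.
Proof. by rewrite addnC -(count_predC id s); congr (_ + _)%N; apply: eq_count. Qed.

Section Geo.
Variables (m n : nat) (g : seq bool).
Hypotheses (m0 : (0 < m)%N) (n0 : (0 < n)%N) (cop : coprime m n) (dy : is_dyck m n g).

Lemma szg : size g = (m + n)%N.
Proof. case/and3P: dy => /eqP h1 /eqP h2 _; by rewrite -(cnt_sum g) h1 h2 addnC. Qed.

Lemma pxN : px g (size g) = m.
Proof. case/and3P: dy => _ /eqP h2 _; by rewrite /px take_size. Qed.
Lemma pyN : py g (size g) = n.
Proof. case/and3P: dy => /eqP h1 _ _; by rewrite /py take_size. Qed.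

Lemma pxy i : (i <= size g)%N -> (px g i + py g i)%N = i.
Proof. by move=> hi; rewrite /px /py cnt_sum size_take_min; apply/minn_idPl. Qed.

Lemma levN : lev m n g (size g) = 0.
Proof. by rewrite /lev pxN pyN mulnC subrr. Qed.

Lemma lev_ge0 i : (i <= size g)%N -> 0 <= lev m n g i.
Proof.
move=> hi; case/and3P: dy => _ _ /allP /(_ i); rewrite mem_iota add0n ltnS hi => /(_ isT).
rewrite /lev => h; lia.
Qed.

Lemma disp i j : (i <= j <= size g)%N -> exists dx dy,
  [/\ px g j = (px g i + dx)%N, py g j = (py g i + dy)%N, (dx + dy = j - i)%N,
      (px g i + dx <= m)%N & (py g i + dy <= n)%N].
Proof.
case/andP=> hij hj.
exists (count negb (take (j - i) (drop i g))), (count id (take (j - i) (drop i g))).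
have ex : px g j = (px g i + count negb (take (j - i) (drop i g)))%N by exact: count_split.
have ey : py g j = (py g i + count id (take (j - i) (drop i g)))%N by exact: count_split.
have hi : (i <= size g)%N by apply: leq_trans hj.
have : (px g j + py g j = j)%N by exact: pxy.
have : (px g i + py g i = i)%N by exact: pxy.
have : (px g j <= m)%N.
  rewrite -pxN /px (count_split _ _ hj); exact: leq_addr.
have : (py g j <= n)%N.
  rewrite -pyN /py (count_split _ _ hj); exact: leq_addr.
rewrite ex ey => *; split => //; lia.
Qed.

Lemma disp2 i j : (i < j <= size g)%N -> exists dx dy,
  [/\ lev m n g j = lev m n g i + (m * dy)%:Z - (n * dx)%:Z, (dx + dy = j - i)%N,
      (px g i + dx <= m)%N, (py g i + dy <= n)%N & (px g i + py g i = i)%N].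
Proof.
case/andP=> hij hj.
have := disp (i:=i) (j:=j); rewrite (ltnW hij) hj => /(_ isT) [dx [dy' [ex ey hs bx by']]].
exists dx, dy'; split => //; last by apply: pxy; apply: leq_trans hj; exact: ltnW.
rewrite /lev ex ey !mulnDr !PoszD; ring.
Qed.

Lemma geo_a i j : (i < j <= size g)%N -> lev m n g i = lev m n g j ->
  i = 0%N /\ j = size g.
Proof.
move=> hij0 heq; have /andP[hij hj] := hij0.
have [dx [dy' [e1 hs bx by' hxy]]] := disp2 hij0.
have e : (m * dy' = n * dx)%N by move: heq; rewrite e1; lia.
have : (m %| n * dx)%N by rewrite -e dvdn_mulr.
rewrite Gauss_dvdr // => hd.
case: (posnP dx) => dx0.
  move: e; rewrite dx0 muln0 => /eqP; rewrite muln_eq0 => /orP[/eqP|/eqP]; lia.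
have := dvdn_leq dx0 hd => hm.
have dxm : dx = m by lia.
have dyn : dy' = n by apply/eqP; rewrite -(eqn_pmul2l m0) e dxm mulnC.
rewrite szg; lia.
Qed.

Lemma geo_b i j : (i < j <= size g)%N -> lev m n g j = lev m n g i + n%:Z ->
  py g i = 0%N.
Proof.
move=> hij0 heq; have /andP[hij hj] := hij0.
have [dx [dy' [e1 hs bx by' hxy]]] := disp2 hij0.
have e : (m * dy' = n * dx.+1)%N by move: heq; rewrite e1; lia.
have : (m %| n * dx.+1)%N by rewrite -e dvdn_mulr.
rewrite Gauss_dvdr // => hd.
have := dvdn_leq (ltn0Sn dx) hd => hm.
have : (n * dx.+1 <= n * m)%N by rewrite -e mulnC leq_pmul2r //; lia.
rewrite leq_pmul2l // => hm2.
have dxm : dx.+1 = m by lia.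
have dyn : dy' = n by apply/eqP; rewrite -(eqn_pmul2l m0) e dxm mulnC.
lia.
Qed.

Lemma geo_c i j : (i < j <= size g)%N -> lev m n g i = lev m n g j + n%:Z ->
  j = i.+1.
Proof.
move=> hij0 heq; have /andP[hij hj] := hij0.
have [dx [dy' [e1 hs bx by' hxy]]] := disp2 hij0.
have e : (m * dy' + n = n * dx)%N by move: heq; rewrite e1; lia.
have dx0 : (0 < dx)%N by lia.
have e' : (m * dy' = n * dx.-1)%N by rewrite -subn1 mulnBr muln1 -e addnK.
have : (m %| n * dx.-1)%N by rewrite -e' dvdn_mulr.
rewrite Gauss_dvdr // => hd.
case: (posnP dx.-1) => d0.
  move: e'; rewrite d0 muln0 => /eqP; rewrite muln_eq0 => /orP[/eqP|/eqP]; lia.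
have := dvdn_leq d0 hd; lia.
Qed.
End Geo.

Definition ind (b : bool) : int := if b then 1 else 0.
Ltac indt := rewrite /ind; repeat case: ifP; lia.

Lemma pyS g t : (t < size g)%N -> py g t.+1 = (py g t + nth false g t)%N.
Proof.
move=> ht; rewrite /py (take_nth false ht) -!cats1 !count_cat /=.
by case: (nth false g t); rewrite /= ?addn0.
Qed.

Section Geo2.
Variables (m n : nat) (g : seq bool).
Hypotheses (m0 : (0 < m)%N) (n0 : (0 < n)%N) (cop : coprime m n) (dy : is_dyck m n g).
Local Notation L := (lev m n g).
Local Notation N := (size g).
Local Notation b := (nth false g).

Lemma distinct_pts k k' : (k < N)%N -> (k' < N)%N -> L k = L k' -> k = k'.
Proof.
move=> hk hk' e; case: (ltngtP k k') => h //.
  by have := geo_a m0 n0 cop dy (i:=k) (j:=k'); rewrite h (ltnW hk') => /(_ isT e) [_]; lia.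
by have := geo_a m0 n0 cop dy (i:=k') (j:=k); rewrite h (ltnW hk) => /(_ isT (esym e)) [_]; lia.
Qed.

Lemma noT i j : (i < N)%N -> b i -> (i < j <= N)%N -> L j != L i + m%:Z + n%:Z.
Proof.
move=> hi bi /andP[hij hj]; apply/eqP => e.
have e1 : L i.+1 = L i + m%:Z by rewrite levS // bi.
case: (ltngtP i.+1 j) => h.
- have := geo_b m0 n0 cop dy (i:=i.+1) (j:=j); rewrite h hj => /(_ isT).
  rewrite e e1 => /(_ erefl); rewrite pyS // bi; lia.
- lia.
- move: e; rewrite -h e1; lia.
Qed.

Lemma noHV i j : (i < j)%N -> (j < N)%N -> b j -> L i != L j + m%:Z + n%:Z.
Proof.
move=> hij hj bj; apply/eqP => e.
have e1 : L j.+1 = L j + m%:Z by rewrite levS // bj.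
have := geo_c m0 n0 cop dy (i:=i) (j:=j.+1); rewrite ltnS (ltnW hij) hj => /(_ isT).
rewrite e1 e => /(_ erefl); lia.
Qed.

Lemma maxlem j : (j <= N)%N -> L j <= 0 \/ exists2 k, (k < j)%N & b k /\ L j <= L k + m%:Z.
Proof.
elim: j => [|j IH] hj; first by left; rewrite lev0.
have hj' : (j < N)%N by [].
rewrite levS //; case bj: (b j); rewrite /stepv.
  by right; exists j => //; split => //; lia.
case: (IH (ltnW hj')) => [h|[k hk [bk h]]]; first by left; lia.
by right; exists k; [exact: ltnW | split => //; lia].
Qed.

Definition Cr (t : int) (j : nat) : int :=
  if b j then ind ((L j < t) && (t < L j + m%:Z))
  else - ind ((L j - n%:Z < t) && (t < L j)).

Lemma crossing t d a : (a + d = N)%N -> (forall j, (a <= j <= N)%N -> L j != t) ->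
  \sum_(a <= j < a + d) Cr t j = ind (t < L (a + d)) - ind (t < L a).
Proof.
elim: d a => [|d IH] a had hne; first by rewrite addn0 big_geq // subrr.
rewrite big_ltn; last lia.
have -> : (a + d.+1 = a.+1 + d)%N by lia.
rewrite IH; first last.
- move=> j /andP[h1 h2]; apply: hne; rewrite h2 andbT; exact: ltnW.
- lia.
have ha : (a < N)%N by lia.
have h1 := hne a; have h2 := hne a.+1.
rewrite leqnn ltnW //= in h1; rewrite leqnSn /= in h2.
move: (h1 isT) (h2 ha); rewrite levS // /Cr.
case: (b a); rewrite /stepv => /eqP u1 /eqP u2; indt.
Qed.
End Geo2.

Lemma card_pairs N (P : nat -> nat -> bool) :
  (#|[set p : 'I_N * 'I_N | P p.1 p.2]|)%:Z = \sum_(i < N) \sum_(j < N) ind (P i j).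
Proof.
rewrite -sum1dep_card -natz natr_sum big_mkcond /= pair_bigA /=.
by apply: eq_bigr => p _; rewrite /ind; case: (P _ _).
Qed.

Lemma card_one N (P : 'I_N -> bool) :
  (#|[set j : 'I_N | P j]|)%:Z = \sum_(j < N) ind (P j).
Proof.
rewrite -sum1dep_card -natz natr_sum big_mkcond /=.
by apply: eq_bigr => p _; rewrite /ind; case: (P _).
Qed.

Definition HP (a b : nat) (x y : bool * int) : bool :=
  [&& ~~ x.1, y.1, x.2 - b%:Z <= y.2 + a%:Z & y.2 <= x.2].
Definition FH a b x y := ind (HP a b x y).

Lemma hstat_pc a b g : (hstat a b g)%:Z = pc (FH a b) (sl a b g).
Proof.
rewrite /hstat card_pairs (pc_idx _ _ (false, 0)) size_sl big_mkord.
apply: eq_bigr => -[i hi] _ /=.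
rewrite -(big_mkord xpredT (fun j => ind (in_H a b g i j))).
rewrite (big_cat_nat _ (n:=i.+1)) //= big1_seq ?add0r; last first.
  move=> j /andP[_]; rewrite mem_index_iota => /andP[_ hj].
  by rewrite /in_H ltnNge -ltnS hj.
apply: eq_big_nat => j /andP[hij hj].
rewrite !nth_sl // /in_H /FH /HP hij hj /=.
by rewrite (set_nth_default false true hi).
Qed.

Lemma star_VH g j : (j < size (star g))%N -> nth false (star g) j ->
  (j.+1 < size (star g))%N && ~~ nth true (star g) j.+1.
Proof.
elim: g j => [|x g IH] j //.
case: x.
- have -> : star (true :: g) = true :: false :: star g by [].
  case: j => [|[|j]] //= hj hb; exact: IH.
- have -> : star (false :: g) = false :: star g by [].
  case: j => [|j] //= hj hb; exact: IH.
Qed.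

Lemma outerS g j : (j < size (star g))%N -> outer (star g) j.+1 = nth false (star g) j.
Proof.
move=> hj; rewrite /outer /=; case e: (nth false (star g) j); last by rewrite andbF.
by have /andP[-> ->] := star_VH hj e.
Qed.

Section Main.
Variables (m n : nat) (g : seq bool).
Local Notation M := ((m + n)%N%:Z).
Local Notation S := (star g).
Local Notation T := (sl (m + n) n (star g)).

Definition CH (t : int) (v : bool * int) : int := ind [&& ~~ v.1, v.2 - n%:Z <= t & t <= v.2].
Definition W (t : int) (y : bool * int) : int := \sum_(v <- stf M y) CH t v.
Definition GK (x y : bool * int) : int := ind x.1 * W (x.2 + M) y.

Lemma sum_T (F : bool * int -> int) :
  \sum_(v <- T) F v = \sum_(j < size S) F (nth false S j, lev (m + n) n S j).
Proof.
rewrite (big_nth (false, 0)) size_sl big_mkord; apply: eq_bigr => -[j hj] _ /=.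
by rewrite nth_sl.
Qed.

Lemma kval_eq j : (j < size S)%N -> nth false S j ->
  (kval (m + n) n S j.+1)%:Z = \sum_(v <- T) CH (lev (m + n) n S j + M) v - 1.
Proof.
move=> hj bj; have /andP[hj1 bj1] := star_VH hj bj.
have lev1 : lev (m + n) n S j.+1 = lev (m + n) n S j + M by rewrite levS // bj.
rewrite /kval card_one sum_T (bigD1 (Ordinal hj1)) //= [in RHS](bigD1 (Ordinal hj1)) //=.
have -> : CH (lev (m + n) n S j + M) (nth false S j.+1, lev (m + n) n S j.+1) = 1.
  rewrite /CH /= (set_nth_default true false hj1) bj1 lev1 /ind /=; case: ifP => //; lia.
rewrite eqxx andbF /ind /= add0r [1 + _]addrC addrK.
apply: eq_bigr => -[j' hj'] /=; rewrite -val_eqE /= => hne.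
rewrite hne /CH /= lev1 (set_nth_default false true hj').
case: (eqVneq j' j) => [e|] /=; last by [].
by rewrite e bj.
Qed.

Lemma sum_outer :
  \sum_(i < (size S).+1 | outer S i) (kval (m + n) n S i)%:Z =
  pc GK (sl m n g) + pc (fun x y => GK y x) (sl m n g).
Proof.
rewrite big_mkcond big_ord_recl /= add0r.
have -> : \sum_(i < size S)
    (if outer S (lift ord0 i) then (kval (m + n) n S (lift ord0 i))%:Z else 0) =
  \sum_(v <- T) ind v.1 * (\sum_(u <- T) CH (v.2 + M) u - 1).
  rewrite sum_T; apply: eq_bigr => -[j hj] _ /=.
  have -> : bump 0 j = j.+1 by rewrite /bump leq0n add1n.
  rewrite outerS //; case e: (nth false S j); last by rewrite /ind mul0r.
  by rewrite kval_eq // /ind mul1r.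
rewrite sl_star big_flatten /= big_map.
have EW : forall t, \sum_(u <- flatten [seq stf M i | i <- sl m n g]) CH t u =
    \sum_(y <- sl m n g) W t y.
  by move=> t; rewrite big_flatten /= big_map.
have -> : \sum_(x <- sl m n g) \sum_(v <- stf M x)
    ind v.1 * (\sum_(u <- flatten [seq stf M i | i <- sl m n g]) CH (v.2 + M) u - 1) =
  \sum_(x <- sl m n g) \sum_(y <- sl m n g) GK x y - \sum_(x <- sl m n g) ind x.1.
  rewrite -sumrB; apply: eq_bigr => -[b L] _; rewrite /GK /stf /=.
  case: b; rewrite !big_cons big_nil /= !EW /ind /=; last first.
    by rewrite mul0r addr0 subr0 big1 // => y _; rewrite mul0r.
  rewrite mul0r !addr0 mul1r; congr (_ - _); apply: eq_bigr => y _; by rewrite mul1r.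
rewrite allpairs_pc -addrA.
have -> : \sum_(x <- sl m n g) GK x x = \sum_(x <- sl m n g) ind x.1.
  apply: eq_bigr => -[b L] _; rewrite /GK /W /stf /=.
  case: b; rewrite /ind ?mul0r // mul1r !big_cons big_nil /CH /=.
  rewrite /ind; case: ifP => h; lia.
by rewrite subrr addr0.
Qed.
End Main.

Lemma sum_sl a b g (F : bool * int -> int) :
  \sum_(v <- sl a b g) F v = \sum_(j < size g) F (nth false g j, lev a b g j).
Proof.
rewrite (big_nth (false, 0)) size_sl big_mkord; apply: eq_bigr => -[j hj] _ /=.
by rewrite nth_sl.
Qed.

Lemma mem_sl a b g x : x \in sl a b g ->
  exists2 k, (k < size g)%N & x = (nth false g k, lev a b g k).
Proof.
case/(nthP (false, 0)) => k; rewrite size_sl => hk <-.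
by exists k => //; rewrite nth_sl.
Qed.

Section Vs.
Variables (m n : nat) (g : seq bool).
Hypotheses (m0 : (0 < m)%N) (n0 : (0 < n)%N) (cop : coprime m n) (dy : is_dyck m n g).
Local Notation M := ((m + n)%N%:Z).
Local Notation S := (star g).
Local Notation T := (sl (m + n) n (star g)).
Local Notation L := (lev m n g).
Local Notation b := (nth false g).

Lemma V_in_T Lv : (true, Lv) \in sl m n g -> (true, Lv) \in T.
Proof.
move=> h; rewrite sl_star; apply/flattenP; exists (stf M (true, Lv)).
  by apply: map_f.
by rewrite /stf /= mem_head.
Qed.

Lemma V_of_T Lv : (true, Lv) \in T -> (true, Lv) \in sl m n g.
Proof.
rewrite sl_star => /flattenP [s /mapP [[c L'] hy ->]].
rewrite /stf /=; case: c hy => hy; rewrite !inE /= ?orbF.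
- by move/eqP => [->].
- by move/eqP.
Qed.

Lemma kval_zero (i : 'I_(size S).+1) : outer S i ->
  ~~ [exists i' : 'I_(size S).+1, outer S i' && (lev (m + n) n S i < lev (m + n) n S i')] ->
  kval (m + n) n S i = 0%N.
Proof.
case: i => -[|j] hi //= ho hnex.
have hj : (j < size S)%N by move: ho; rewrite /outer => /and4P[].
have bj : nth false S j by move: ho; rewrite outerS.
apply/eqP; rewrite -(eqr_nat int) natz kval_eq // subr_eq0.
have lev1 : lev (m + n) n S j.+1 = lev (m + n) n S j + M by rewrite levS // bj.
have [k hk [bk Lk]] : exists2 k, (k < size g)%N & b k = true /\ L k = lev (m + n) n S j.
  have : (true, lev (m + n) n S j) \in sl m n g.
    apply: V_of_T; rewrite -bj -(nth_sl (m + n) n hj); apply: mem_nth; by rewrite size_sl.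
  by case/mem_sl => k hk [e1 e2]; exists k.
have maxk : forall k', (k' < size g)%N -> b k' -> L k' <= L k.
  move=> k' hk' bk'.
  have : (true, L k') \in T by apply: V_in_T; rewrite -bk' -(nth_sl m n hk'); apply: mem_nth; rewrite size_sl.
  case/(nthP (false, 0)) => j'; rewrite size_sl => hj' e.
  move: e; rewrite nth_sl // => -[e1 e2].
  have hj'1 : (j'.+1 < (size S).+1)%N by [].
  move/existsPn: hnex => /(_ (Ordinal hj'1)) /=.
  rewrite (outerS hj') e1 /= lev1 (levS _ _ hj') e1 /stepv e2 -Lk ltrD2r -real_leNgt ?num_real //. 
have L0 : 0 <= L k by apply: lev_ge0 => //; exact: ltnW.
rewrite sl_star big_flatten /= big_map (sum_sl m n g (W m n (lev (m + n) n S j + M))).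
rewrite (bigD1 (Ordinal hk)) //= big1 ?addr0.
  rewrite /W /stf /= bk !big_cons big_nil /CH /= /ind; case: ifP => h; lia.
move=> [k' hk'] /=; rewrite -val_eqE /= => hne.
rewrite /W /stf /=; case bk': (b k'); rewrite !big_cons ?big_nil /CH /= /ind.
- have := maxk k' hk' bk'.
  have : L k' != L k by apply/eqP => e; move/eqP: hne; apply; exact: (distinct_pts m0 n0 cop dy).
  move=> /eqP ne le; case: ifP => h; lia.
- have := maxlem m0 n0 cop dy (ltnW hk'); case=> [h1|[k'' hk'' [bk'' h1]]].
    case: ifP => h; lia.
  have := maxk k'' (ltn_trans hk'' hk') bk''; case: ifP => h; lia.
Qed.
End Vs.

Section Fin.
Variables (m n : nat) (g : seq bool).
Hypotheses (m0 : (0 < m)%N) (n0 : (0 < n)%N) (cop : coprime m n) (dy : is_dyck m n g).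
Local Notation M := ((m + n)%N%:Z).
Local Notation S := (star g).
Local Notation L := (lev m n g).
Local Notation b := (nth false g).

Lemma Vset_outer :
  \sum_(i in Vset (m + n) n S) (kval (m + n) n S i)%:Z =
  \sum_(i < (size S).+1 | outer S i) (kval (m + n) n S i)%:Z.
Proof.
rewrite [RHS](bigID (fun i => i \in Vset (m + n) n S)) /=.
rewrite [X in _ = _ + X]big1 ?addr0.
  apply: eq_bigl => i; rewrite /Vset inE; by case: (outer S i).
move=> i /andP[ho]; rewrite /Vset inE ho /= => hv.
by rewrite (kval_zero m0 n0 cop dy ho hv).
Qed.

Definition FHS (x y : bool * int) : int :=
  \sum_(u <- stf M x) \sum_(v <- stf M y) FH (m + n) n u v.

Lemma hstar : (hstat (m + n) n S)%:Z = pc FHS (sl m n g).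
Proof.
rewrite hstat_pc sl_star pc_flatten big1 ?add0r //.
move=> [[] L'] _; rewrite /stf /= ?big_cons ?big_nil //=.
Qed.

Definition DD (x y : bool * int) : int :=
  FHS x y - (GK m n x y + GK m n y x) - FH m n x y.

Lemma DD_H (i j : nat) : (i < j)%N -> (j < size g)%N -> b i = false ->
  DD (b i, L i) (b j, L j) = 0.
Proof.
move=> hij hj bi; rewrite bi.
case bj: (b j); last first.
  rewrite /DD /FHS /GK /W /stf /= !big_cons !big_nil /FH /HP /CH /ind /=; lia.
have := noHV m0 n0 cop dy hij hj bj => /eqP ne.
rewrite /DD /FHS /GK /W /stf /= !big_cons !big_nil /FH /HP /CH /ind /=.
repeat case: ifP; lia.
Qed.

Lemma DD_V (i j : nat) : (i < j)%N -> (j < size g)%N -> b i = true ->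
  DD (b i, L i) (b j, L j) = Cr m n g (L i + m%:Z + n%:Z) j.
Proof.
move=> hij hj bi; rewrite bi.
have hi : (i < size g)%N by apply: ltn_trans hj.
have n1 : L j != L i + m%:Z + n%:Z by apply: noT => //; rewrite hij ltnW.
have n2 : L j.+1 != L i + m%:Z + n%:Z by apply: noT => //; rewrite hj ltnW.
have n3 : L j != L i.
  by apply/eqP => e; have := distinct_pts m0 n0 cop dy hj hi e; lia.
move: n2; rewrite levS // /Cr.
case bj: (b j); rewrite /stepv => /eqP n2; move/eqP: n1 => n1; move/eqP: n3 => n3;
rewrite /DD /FHS /GK /W /stf /= !big_cons !big_nil /FH /HP /CH /ind /=;
rewrite ?PoszD; repeat case: ifP; lia.
Qed.

Lemma pcDD : pc DD (sl m n g) = 0.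
Proof.
rewrite (pc_idx _ _ (false, 0)) size_sl big1_seq // => i /andP[_].
rewrite mem_index_iota => /andP[_ hi].
rewrite nth_sl //.
rewrite (eq_big_nat _ _ (F2 := fun j => DD (b i, L i) (b j, L j))); last first.
  by move=> j /andP[_ hj]; rewrite nth_sl.
case bi: (b i).
- rewrite (eq_big_nat _ _ (F2 := Cr m n g (L i + m%:Z + n%:Z))); last first.
    by move=> j /andP[hij hj]; rewrite -bi DD_V.
  have e : (i.+1 + (size g - i.+1) = size g)%N by rewrite subnKC.
  rewrite -{1}e crossing // ?e; last first.
    move=> j /andP[h1 h2]; apply: noT => //; rewrite h2 andbT; exact: h1.
  rewrite levN // levS // bi /stepv.
  have L0 : 0 <= L i by apply: lev_ge0 => //; exact: ltnW.
  rewrite /ind; case: ifP => h1; case: ifP => h2; lia.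
- rewrite big1_seq // => j /andP[_]; rewrite mem_index_iota => /andP[hij hj].
  by have := DD_H hij hj bi; rewrite bi.
Qed.
End Fin.

Local Close Scope ring_scope.

Theorem mainTheorem7 (m n : nat) (g : seq bool) :
  0 < m -> 0 < n -> coprime m n -> is_dyck m n g ->
  ((hstat m n g)%:Z =
   (hstat (m + n) n (star g))%:Z
   - \sum_(i in Vset (m + n) n (star g)) (kval (m + n) n (star g) i)%:Z)%R.
Proof.
Local Open Scope ring_scope.
move=> m0 n0 cop dy.
rewrite hstat_pc hstar Vset_outer // sum_outer.
have := pcDD m0 n0 cop dy; rewrite /DD.
rewrite (pc_sub (fun x y => FHS m n x y - (GK m n x y + GK m n y x)) (FH m n)).
rewrite (pc_sub (FHS m n) (fun x y => GK m n x y + GK m n y x)).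
rewrite (pc_add (GK m n) (fun x y => GK m n y x)).
move/eqP; rewrite subr_eq0 => /eqP <-; done.
Qed.
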